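(* Let $n$ and $k$ be positive integers, and let $\mathcal{Q}$ be a Boolean lattice of dimension $n+k$ whose elements are colored blue or red. Then $\mathcal{Q}$ contains an all-red copy of $Q_n$ or an all-blue chain of length $k+1$ (i.e. on $k+1$ elements).
   Context: The Boolean lattice of dimension $N$ is the poset of all subsets of an $N$-element set ordered by inclusion; $Q_n$ denotes the Boolean lattice of dimension $n$. A copy of $Q_n$ in $\mathcal{Q}$ is an induced subposet of $\mathcal{Q}$ isomorphic to $Q_n$. *)

(* Defs.v *)
From mathcomp Require Import all_boot.
Set Implicit Arguments. Unset Strict Implicit. Unset Printing Implicit Defensive.


(* A copy of Q_n in Q_N: an induced subposet isomorphic to Q_n, i.e. the image
   of an order embedding f : Q_n -> Q_N (A \subset B <-> f A \subset f B). *)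
Definition order_embedding (n N : nat) (f : {set 'I_n} -> {set 'I_N}) : Prop :=
  forall A B : {set 'I_n}, (A \subset B) = (f A \subset f B).

Definition is_chain (N : nat) (s : seq {set 'I_N}) : Prop :=
  uniq s /\ forall A B : {set 'I_N}, A \in s -> B \in s -> (A \subset B) || (B \subset A).

(* Main.v *)
Require Import Defs.
From mathcomp Require Import all_boot.
Set Implicit Arguments. Unset Strict Implicit. Unset Printing Implicit Defensive.

Section Aux.
Variable N : nat.
Variable c : {set 'I_N} -> bool.

Definition chainb (s : seq {set 'I_N}) :=
  uniq s && all (fun A : {set 'I_N} => all (fun B : {set 'I_N} => (A \subset B) || (B \subset A)) s) s.

Definition Pb (X : {set 'I_N}) m :=
  [exists t : m.-tuple {set 'I_N}, chainb t && all (fun Y : {set 'I_N} => ~~ c Y && (Y \subset X)) t].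

Lemma Pb_mono (X Y : {set 'I_N}) m : X \subset Y -> Pb X m -> Pb Y m.
Proof.
move=> XY /existsP [t /andP [ch al]]; apply/existsP; exists t.
rewrite ch /=; apply/allP => Z Zt; have /andP [-> ZX] := allP al Z Zt.
exact: subset_trans ZX XY.
Qed.

Lemma Pb_ext (X Y : {set 'I_N}) m : Pb X m -> X \proper Y -> ~~ c Y -> Pb Y m.+1.
Proof.
move=> /existsP [t /andP [/andP [ut ch] al]] /properP [XY [y yY ynX]] cY.
apply/existsP; exists (cons_tuple Y t) => /=.
have sub : forall Z, Z \in t -> Z \subset X.
  by move=> Z Zt; have /andP [_ ->] := allP al Z Zt.
have YnT : Y \notin t.
  apply/negP => Yt; have := sub Y Yt => /subsetP /(_ y yY); by rewrite (negbTE ynX).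
rewrite /chainb /= YnT ut /= subxx /=.
apply/and3P; split; last first.
- apply/allP => Z Zt; have /andP [-> ZX] := allP al Z Zt.
  exact: subset_trans ZX XY.
- by rewrite cY.
apply/andP; split.
- apply/allP => B Bt; by rewrite (subset_trans (sub B Bt) XY) orbT.
- apply/allP => A At /=; rewrite (subset_trans (sub A At) XY) /=.
  exact: (allP ch A At).
Qed.

Lemma Pb_1 (Y : {set 'I_N}) : ~~ c Y -> Pb Y 1.
Proof.
move=> cY; apply/existsP; exists [tuple Y].
by rewrite /chainb /= subxx cY.
Qed.

End Aux.

Theorem corollary9 (n k : nat) (hn : 0 < n) (hk : 0 < k)
    (colour : {set 'I_(n + k)} -> bool) :
  (exists f : {set 'I_n} -> {set 'I_(n + k)},
      order_embedding f /\ forall A, colour (f A) = true)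
  \/
  (exists s : seq {set 'I_(n + k)},
      size s = k.+1 /\ is_chain s /\ forall X, X \in s -> colour X = false).
Proof.
pose N := (n + k)%N.
case: (boolP [exists t : (k.+1).-tuple {set 'I_(n + k)},
   chainb t && all (fun Y : {set 'I_(n + k)} => ~~ colour Y) t]) => [/existsP [t /andP [/andP [ut ch] al]]|noch].
  right; exists t; split; first by rewrite size_tuple.
  split; first split => //.
    by move=> A B At Bt; exact: (allP (allP ch A At) B Bt).
  by move=> X Xt; apply/negbTE; exact: (allP al X Xt).
left.
have noP : forall X, ~~ Pb colour X k.+1.
  move=> X; apply/negP => /existsP [t /andP [ch al]].
  move/negP: noch; apply; apply/existsP; exists t; rewrite ch /=.
  by apply/allP => Y Yt; have /andP [-> _] := allP al Y Yt.
pose emb (A : {set 'I_n}) : {set 'I_(n + k)} := [set lshift k i | i in A].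
pose K (j : nat) : {set 'I_(n + k)} := [set i : 'I_(n + k) | (n <= i) && (i < n + j)].
pose Xs A j := emb A :|: K j.
have ex : forall A, exists j, ~~ Pb colour (Xs A j) j.+1 by move=> A; exists k; exact: noP.
pose jA A := ex_minn (ex A).
have jAP : forall A, ~~ Pb colour (Xs A (jA A)) (jA A).+1 /\
    (forall j, ~~ Pb colour (Xs A j) j.+1 -> jA A <= j).
  by move=> A; rewrite /jA; case: ex_minnP.
have jk : forall A, jA A <= k by move=> A; apply: (jAP A).2; exact: noP.
have embS : forall A B : {set 'I_n}, A \subset B -> emb A \subset emb B.
  by move=> A B AB; apply: imsetS.
have XsS : forall (A B : {set 'I_n}) j, A \subset B -> Xs A j \subset Xs B j.
  by move=> A B j AB; apply: setSU; exact: embS.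
have jmono : forall A B : {set 'I_n}, A \subset B -> jA A <= jA B.
  move=> A B AB; apply: (jAP A).2; apply/negP => PA.
  by move: (jAP B).1 => /negP; apply; apply: Pb_mono PA; exact: XsS.
exists (fun A => Xs A (jA A)); split.
  move=> A B; apply/idP/idP => [AB|sub].
    apply: setUSS; first exact: embS.
    apply/subsetP => i; rewrite !inE => /andP [-> lt] /=.
    by apply: (leq_trans lt); rewrite leq_add2l; apply: jmono.
  apply/subsetP => i iA.
  have : lshift k i \in Xs B (jA B).
    apply: (subsetP sub); rewrite !inE; apply/orP; left; apply/imsetP; by exists i.
  rewrite !inE /= leqNgt ltn_ord /= orbF => /imsetP [i' i'B e].
  by have -> : i = i' by apply: (@lshift_inj n k); exact: e.
move=> A; have [nP minP] := jAP A.
case E: (jA A) nP minP => [|j] nP minP.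
  apply/negPn/negP => cY; move/negP: nP; apply; exact: Pb_1.
apply/negPn/negP => cY; move/negP: nP; apply.
have Pj : Pb colour (Xs A j) j.+1.
  case: (boolP (Pb colour (Xs A j) j.+1)) => // H; have := minP j H; by rewrite ltnn.
apply: Pb_ext Pj _ cY.
have jk' : j < k by rewrite -E; exact: jk.
apply/properP; split.
  apply: setUS; apply/subsetP => i; rewrite !inE => /andP [-> lt] /=.
  by apply: (leq_trans lt); rewrite leq_add2l.
have lt : n + j < n + k by rewrite ltn_add2l.
exists (Ordinal lt).
  by rewrite !inE /= leq_addr /= ltn_add2l ltnSn orbT.
rewrite !inE /= leq_addr /= ltnn orbF; apply/imsetP => [[i _ e]].
move: (congr1 val e) => /= ei; have := ltn_ord i; rewrite -ei.
by rewrite ltnNge leq_addr.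
Qed.
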